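(* Let $M$ be a closed Riemannian manifold and $\gamma$ a closed piecewise differentiable curve on $M$ of length $L$. Suppose there is a homotopy $H(t,\tau)=\gamma_\tau(t)$ of width $W$ contracting $\gamma=\gamma_0$ to a point through closed curves of length at most $L$. Then there is a homotopy contracting $\gamma$ to the constant loop at $\gamma(0)$ through loops based at $\gamma(0)$, each of length at most $L+2W$.
   Context: For a homotopy of closed curves $H(t,\tau)$ ($t$ the curve parameter, $\tau\in[0,1]$ the homotopy parameter), its width is $\sup_t \ell(\tau\mapsto H(t,\tau))$, the maximal length of the trajectory of a point of the curve during the homotopy. *)

(* Defs.v *)
From HB Require Import structures.
From mathcomp Require Import all_boot all_order all_algebra.
From mathcomp Require Import all_classical all_reals all_analysis.
Set Implicit Arguments. Unset Strict Implicit. Unset Printing Implicit Defensive.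
Import Order.TTheory GRing.Theory Num.Theory.
Import numFieldNormedType.Exports.
Local Open Scope classical_set_scope.
Local Open Scope ring_scope.

Section Defs.
Variable R : realType.

Definition eucl {N : nat} (v : 'rV[R]_N) : R :=
  Num.sqrt (\sum_(i < N) v ord0 i ^+ 2).

Fixpoint Ck {N c : nat} (n : nat) (f : 'rV[R]_N -> 'rV[R]_c) : Prop :=
  match n with
  | 0 => continuous f
  | n'.+1 => (forall x, differentiable f x) /\
             forall v, Ck n' (fun x => 'd f x v)
  end.

Definition smooth {N c : nat} (f : 'rV[R]_N -> 'rV[R]_c) : Prop :=
  forall n, Ck n f.

(* M is a closed (compact, boundaryless) smooth embedded submanifold of R^N
   of codimension c: locally a regular level set of a smooth map. *)
Definition closed_submanifold (N c : nat) (M : set 'rV[R]_N) : Prop :=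
  compact M /\
  forall p, M p -> exists (U : set 'rV[R]_N) (F : 'rV[R]_N -> 'rV[R]_c),
    [/\ open U, U p, smooth F,
        (forall w, exists v, 'd F p v = w) &
        M `&` U = F @^-1` [set 0] `&` U].

Definition curve_length {N : nat} (g : R -> 'rV[R]_N) (a b : R) : \bar R :=
  ereal_sup [set x : \bar R | exists (n : nat) (s : nat -> R),
     [/\ s 0%N = a, s n = b, (forall i, (i < n)%N -> s i <= s i.+1) &
         x = ((\sum_(i < n) eucl (g (s i.+1) - g (s i)))%:E)%E]].

Definition piecewise_C1 {N : nat} (g : R -> 'rV[R]_N) : Prop :=
  exists (n : nat) (s : nat -> R),
    [/\ s 0%N = 0, s n = 1, (forall i, (i < n)%N -> s i < s i.+1) &
        forall i, (i < n)%N -> exists h : R -> 'rV[R]_N,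
          [/\ forall x, derivable h x 1, continuous (derive1 h) &
              forall x, s i <= x <= s i.+1 -> h x = g x]].

Definition unit_square : set (R * R) :=
  [set p | 0 <= p.1 <= 1 /\ 0 <= p.2 <= 1].

End Defs.

(* Main.v *)
Require Import Defs.
From HB Require Import structures.
From mathcomp Require Import all_boot all_order all_algebra.
From mathcomp Require Import all_classical all_reals all_analysis.
From mathcomp Require Import ring lra.
Import Order.TTheory GRing.Theory Num.Theory.
Import numFieldNormedType.Exports.
Local Open Scope classical_set_scope.
Local Open Scope ring_scope.

Set Implicit Arguments. Unset Strict Implicit.
Section L.
Variable R : realType.

Lemma CS (N : nat) (a b : 'I_N -> R) :
  (\sum_i a i * b i) ^+ 2 <= (\sum_i a i ^+ 2) * (\sum_i b i ^+ 2).
Proof.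
have H0 : 0 <= \sum_i \sum_j (a i * b j - a j * b i) ^+ 2.
  by apply: sumr_ge0 => i _; apply: sumr_ge0 => j _; exact: sqr_ge0.
have E : \sum_i \sum_j (a i * b j - a j * b i) ^+ 2 =
   2 * ((\sum_i a i ^+ 2) * (\sum_i b i ^+ 2)) - 2 * (\sum_i a i * b i) ^+ 2.
  have E1 : forall i j, (a i * b j - a j * b i) ^+ 2 =
     a i ^+ 2 * b j ^+ 2 + a j ^+ 2 * b i ^+ 2 - 2 * ((a i * b i) * (a j * b j)).
    by move=> i j; ring.
  under eq_bigr do under eq_bigr do rewrite E1.
  under eq_bigr do rewrite sumrB big_split /=.
  rewrite sumrB big_split /=.
  have P : \sum_i \sum_j a i ^+ 2 * b j ^+ 2 = (\sum_i a i ^+ 2) * (\sum_i b i ^+ 2).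
    by rewrite mulr_suml; apply: eq_bigr => i _; rewrite mulr_sumr.
  have -> : \sum_i \sum_j a j ^+ 2 * b i ^+ 2 = (\sum_i a i ^+ 2) * (\sum_i b i ^+ 2).
    by rewrite exchange_big /=.
  rewrite P.
  have -> : \sum_i \sum_j 2 * (a i * b i * (a j * b j)) = 2 * (\sum_i a i * b i) ^+ 2.
    rewrite expr2 mulr_suml mulr_sumr; apply: eq_bigr => i _.
    rewrite mulr_sumr mulr_sumr; apply: eq_bigr => j _; ring.
  ring.
move: H0; rewrite E subr_ge0 => H1.
by rewrite -(@ler_pM2l _ 2) //.
Qed.

Lemma eucl_ge0 (N : nat) (v : 'rV[R]_N) : 0 <= eucl v.
Proof. exact: sqrtr_ge0. Qed.

Lemma eucl_opp (N : nat) (v : 'rV[R]_N) : eucl (- v) = eucl v.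
Proof. by rewrite /eucl; congr Num.sqrt; apply: eq_bigr => i _; rewrite mxE sqrrN. Qed.

Lemma eucl_sub (N : nat) (u v : 'rV[R]_N) : eucl (u - v) = eucl (v - u).
Proof. by rewrite -eucl_opp opprB. Qed.

Lemma eucl_triangle (N : nat) (u v : 'rV[R]_N) : eucl (u + v) <= eucl u + eucl v.
Proof.
rewrite /eucl.
set A := \sum_i u ord0 i ^+ 2; set B := \sum_i v ord0 i ^+ 2.
set C := \sum_i u ord0 i * v ord0 i.
have A0 : 0 <= A by apply: sumr_ge0 => i _; exact: sqr_ge0.
have B0 : 0 <= B by apply: sumr_ge0 => i _; exact: sqr_ge0.
have E : \sum_i (u + v) ord0 i ^+ 2 = A + B + 2 * C.
  rewrite /A /B /C mulr_sumr -!big_split /=; apply: eq_bigr => i _; rewrite mxE; ring.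
have HC : C <= Num.sqrt A * Num.sqrt B.
  rewrite -sqrtrM //; apply: (le_trans (ler_norm C)).
  by rewrite -sqrtr_sqr ler_wsqrtr // CS.
rewrite E -[X in _ <= X]ger0_norm ?addr_ge0 ?sqrtr_ge0 //.
rewrite -sqrtr_sqr ler_wsqrtr //.
rewrite sqrrD !sqr_sqrtr //.
lra.
Qed.

Section Part.
Variable N : nat.
Implicit Types (g f : R -> 'rV[R]_N).

Inductive partI g : R -> R -> R -> Prop :=
| pnil a : partI g a a 0
| pcons a x b S : a <= x -> partI g x b S -> partI g a b (eucl (g x - g a) + S).

Lemma partI_le g a b S : partI g a b S -> a <= b.
Proof. by elim=> // a' x b' S' ax _ xb; exact: le_trans ax xb. Qed.

Lemma partI_ge0 g a b S : partI g a b S -> 0 <= S.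
Proof. by elim=> // a' x b' S' _ _ H; rewrite addr_ge0 // eucl_ge0. Qed.

Lemma partI_one g a b : a <= b -> partI g a b (eucl (g b - g a)).
Proof. by move=> ab; rewrite -[X in partI _ _ _ X]addr0; apply: pcons => //; exact: pnil. Qed.

Lemma partI_cat g a b c S1 S2 : partI g a b S1 -> partI g b c S2 -> partI g a c (S1 + S2).
Proof.
elim=> [a'|a' x b' S ax _ IH] H2; first by rewrite add0r.
by rewrite -addrA; apply: pcons => //; exact: IH.
Qed.

Lemma partI_split g a c S b : partI g a c S -> a <= b -> b <= c ->
  exists S1 S2, [/\ partI g a b S1, partI g b c S2 & S <= S1 + S2].
Proof.
move=> P; elim: P b => [a' | a' x c' S' ax P IH] b ab bc.
  have -> : b = a' by apply/eqP; rewrite eq_le bc ab.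
  by exists 0, 0; split; rewrite ?addr0 //; exact: pnil.
have [xb|bx] := leP x b.
  have [S1 [S2 [P1 P2 le]]] := IH b xb bc.
  exists (eucl (g x - g a') + S1), S2; split => //; first exact: pcons.
  by rewrite -addrA lerD2l.
exists (eucl (g b - g a')), (eucl (g x - g b) + S'); split.
- exact: partI_one.
- by apply: pcons => //; exact: ltW.
- rewrite addrA lerD2r.
  have -> : g x - g a' = (g b - g a') + (g x - g b) by rewrite [RHS]addrC addrA subrK.
  exact: eucl_triangle.
Qed.

Lemma partI_ext f g a b S : (forall x, a <= x <= b -> f x = g x) ->
  partI f a b S -> partI g a b S.
Proof.
move=> E P; elim: P E => [a'|a' x b' S' ax P IH] E; first exact: pnil.
have xb := partI_le P.
have -> : f x = g x by apply: E; rewrite ax xb.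
have -> : f a' = g a' by apply: E; rewrite lexx (le_trans ax xb).
apply: pcons => //; apply: IH => y /andP[xy yb]; apply: E.
by rewrite yb (le_trans ax xy).
Qed.

Lemma partI_mono g (phi : R -> R) a b S :
  (forall x y, a <= x -> x <= y -> y <= b -> phi x <= phi y) ->
  partI (g \o phi) a b S -> partI g (phi a) (phi b) S.
Proof.
move=> M P; elim: P M => [a'|a' x b' S' ax P IH] M; first exact: pnil.
have xb := partI_le P.
apply: pcons; first exact: M.
apply: IH => y z xy yz zb; apply: M => //; exact: le_trans ax xy.
Qed.

Lemma partI_anti g (phi : R -> R) a b S :
  (forall x y, a <= x -> x <= y -> y <= b -> phi y <= phi x) ->
  partI (g \o phi) a b S -> partI g (phi b) (phi a) S.
Proof.
move=> M P; elim: P M => [a'|a' x b' S' ax P IH] M; first exact: pnil.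
have xb := partI_le P.
rewrite addrC; apply: partI_cat.
  apply: IH => y z xy yz zb; apply: M => //; exact: le_trans ax xy.
rewrite /= eucl_sub; apply: partI_one; exact: M.
Qed.

Lemma part_partI g b n : forall a (s : nat -> R), s 0%N = a -> s n = b ->
  (forall i, (i < n)%N -> s i <= s i.+1) ->
  partI g a b (\sum_(i < n) eucl (g (s i.+1) - g (s i))).
Proof.
elim: n => [|n IH] a s s0 sn M.
  by rewrite big_ord0 -s0 sn; exact: pnil.
rewrite big_ord_recl /= -s0; apply: pcons; first exact: M.
have := IH (s 1%N) (fun i => s i.+1) erefl sn (fun i H => M i.+1 H).
by congr partI; apply: eq_bigr => i _.
Qed.

Lemma partI_part g a b S : partI g a b S -> exists n (s : nat -> R),
  [/\ s 0%N = a, s n = b, (forall i, (i < n)%N -> s i <= s i.+1) &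
      S = \sum_(i < n) eucl (g (s i.+1) - g (s i))].
Proof.
elim=> [a'|a' x b' S' ax P [n [s [s0 sn M ->]]]].
  by exists 0%N, (fun _ => a'); split => //; rewrite big_ord0.
exists n.+1, (fun i => if i is j.+1 then s j else a'); split => //.
- by case=> [|i] /= H; [rewrite s0 | exact: M].
- by rewrite big_ord_recl /= s0.
Qed.

Lemma len_ge g a b S : partI g a b S -> (S%:E <= curve_length g a b)%E.
Proof.
move=> /partI_part [n [s [s0 sn M ->]]].
by apply: ereal_sup_ubound; exists n, s; split.
Qed.

Lemma len_le g a b B : (forall S, partI g a b S -> S <= B) ->
  (curve_length g a b <= B%:E)%E.
Proof.
move=> H; apply: ge_ereal_sup => _ [n [s [s0 sn M ->]]].
by rewrite lee_fin; apply: H; exact: part_partI.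
Qed.

Lemma len_bound g a b B S : (curve_length g a b <= B%:E)%E -> partI g a b S -> S <= B.
Proof. by move=> H P; rewrite -lee_fin (le_trans (len_ge P) H). Qed.

End Part.
End L.
Section C.
Variable R : realType.
Lemma fst_cont (x : R * R) : {for x, continuous (fun p : R * R => p.1)}.
Proof. exact: cvg_fst. Qed.
Lemma snd_cont (x : R * R) : {for x, continuous (fun p : R * R => p.2)}.
Proof. exact: cvg_snd. Qed.

Lemma phiM_cont (x : R * R) : 2 * x.2 <= 1 ->
  {for x, continuous (fun p : R * R => ((2 * p.1 - p.2) / (2 - 2 * p.2), 2 * p.2))}.
Proof.
move=> hx.
rewrite /prop_for /continuous_at /=.
apply: (@cvg_pair _ _ _ (nbhs x) (nbhs ((2 * x.1 - x.2) / (2 - 2 * x.2))) (nbhs (2 * x.2))) => /=.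
  apply: cvgM.
    apply: cvgB; last exact: snd_cont.
    apply: cvgM; [exact: cvg_cst | exact: fst_cont].
  apply: cvgV; first by apply/eqP; lra.
  apply: cvgB; first exact: cvg_cst.
  apply: cvgM; [exact: cvg_cst | exact: snd_cont].
apply: cvgM; [exact: cvg_cst | exact: snd_cont].
Qed.
Lemma min_cont (f g : R * R -> R) (x : R * R) :
  f y @[y --> x] --> f x -> g y @[y --> x] --> g x ->
  Num.min (f y) (g y) @[y --> x] --> Num.min (f x) (g x).
Proof. move=> cf cg; exact: (@continuous_min R _ f g x cf cg). Qed.

Lemma phiE_cont (x : R * R) :
  {for x, continuous (fun p : R * R => (0 : R, Num.min (Num.min (4 * p.1) (4 - 4 * p.1))
                                   (Num.min (2 * p.2) (2 - 2 * p.2))))}.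
Proof.
rewrite /prop_for /continuous_at /=.
apply: (@cvg_pair _ _ _ (nbhs x) (nbhs (0 : R)) (nbhs (Num.min (Num.min (4 * x.1) (4 - 4 * x.1))
                                   (Num.min (2 * x.2) (2 - 2 * x.2))))) => /=.
  exact: cvg_cst.
apply: min_cont; apply: min_cont.
- apply: cvgM; [exact: cvg_cst | exact: fst_cont].
- apply: cvgB; first exact: cvg_cst.
  apply: cvgM; [exact: cvg_cst | exact: fst_cont].
- apply: cvgM; [exact: cvg_cst | exact: snd_cont].
- apply: cvgB; first exact: cvg_cst.
  apply: cvgM; [exact: cvg_cst | exact: snd_cont].
Qed.
Lemma within_comp (N : nat) (A B : set (R * R)) (phi : R * R -> R * R) (h : R * R -> 'rV[R]_N) :
  (forall x, A x -> B (phi x)) -> (forall x, A x -> {for x, continuous phi}) ->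
  {within B, continuous h} -> {within A, continuous (h \o phi)}.
Proof.
move=> AB cphi ch; apply/subspace_continuousP => x Ax.
have hB := (subspace_continuousP B h).1 ch (phi x) (AB x Ax).
apply: cvg_trans hB.
change (h @ (phi @ within A (nbhs x)) `=>` h @ within B (nbhs (phi x))).
apply: cvg_fmap2 => P /= BP.
have := cphi x Ax _ BP.
move=> H.
change (nbhs x (fun z => A z -> P (phi z))).
have H' : nbhs x (fun z => B (phi z) -> P (phi z)) := H.
apply: (filterS _ H') => z Hz Az; exact: Hz (AB z Az).
Qed.
End C.
Lemma minE_cases (R : realType) (x y : R) :
  (Num.min x y = x /\ x <= y) \/ (Num.min x y = y /\ y <= x).
Proof.
case: (leP x y) => h; [left; split => //; exact: min_l | right].
have h2 := ltW h; split => //; exact: min_r.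
Qed.
Ltac dmin := repeat match goal with
 | |- context[Num.min ?x ?y] =>
  let h := fresh "hm" in let e := fresh "e" in
  destruct (minE_cases x y) as [[e h]|[e h]]; rewrite e; clear e; revert h
 end; intros.

Section Main.
Variables (R : realType) (N : nat) (H : R -> R -> 'rV[R]_N).

Definition mE (t u : R) := Num.min (Num.min (4 * t) (4 - 4 * t)) (Num.min (2 * u) (2 - 2 * u)).
Definition mX (t u : R) := (2 * t - u) / (2 - 2 * u).
Definition inA (t u : R) : bool := [&& 2 * u <= 1, u <= 2 * t & 2 * t <= 2 - u].
Definition Gf (t u : R) := if inA t u then H (mX t u) (2 * u) else H 0 (mE t u).

Lemma mE_01 t u : 0 <= t <= 1 -> 0 <= u <= 1 -> 0 <= mE t u <= 1.
Proof. move=> /andP[? ?] /andP[? ?]; rewrite /mE; apply/andP; split; dmin; lra. Qed.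

Lemma mX_01 t u : inA t u -> 0 <= mX t u <= 1.
Proof.
case/and3P => h1 h2 h3; have d : 0 < 2 - 2 * u by lra.
rewrite /mX; apply/andP; split.
  by apply: divr_ge0; [lra | exact: ltW].
by rewrite ler_pdivrMr // mul1r; lra.
Qed.

Variable q : 'rV[R]_N.
Hypothesis H01 : forall tau, 0 <= tau <= 1 -> H 0 tau = H 1 tau.
Hypothesis Hq : forall t, 0 <= t <= 1 -> H t 1 = q.

Lemma GE t u : 0 <= t <= 1 -> 0 <= u <= 1 ->
  [|| 1 <= 2 * u, 2 * t <= u | 2 - u <= 2 * t] -> Gf t u = H 0 (mE t u).
Proof.
move=> /andP[t0 t1] /andP[u0 u1] hB; rewrite /Gf; case: ifP => // hA.
have hX := mX_01 hA.
move: hA => /and3P[h1 h2 h3].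
have d : 2 - 2 * u != 0 by apply/eqP; lra.
case/or3P: hB => hb.
- have e : 2 * u = 1 by lra.
  rewrite e Hq //.
  have -> : mE t u = 1 by rewrite /mE; dmin; lra.
  by rewrite Hq //; lra.
- have -> : mX t u = 0 by rewrite /mX (_ : 2 * t - u = 0) ?mul0r //; lra.
  congr (H 0 _); rewrite /mE; dmin; lra.
- have -> : mX t u = 1 by rewrite /mX (_ : 2 * t - u = 2 - 2 * u) ?divff //; lra.
  rewrite -H01; last lra.
  congr (H 0 _); rewrite /mE; dmin; lra.
Qed.

Lemma G_mid t u : inA t u -> Gf t u = H (mX t u) (2 * u).
Proof. by rewrite /Gf => ->. Qed.


Lemma G_len (u L W : R) : 0 <= u <= 1 -> 0 <= L -> 0 <= W ->
  (forall y S, 0 <= y <= 1 -> partI (H 0) 0 y S -> S <= W) ->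
  (forall v S, 0 <= v <= 1 -> partI (H^~ v) 0 1 S -> S <= L) ->
  forall S, partI (Gf^~ u) 0 1 S -> S <= L + 2 * W.
Proof.
move=> /andP[u0 u1] L0 W0 hW hL S P.
case: (leP (2 * u) 1) => hu.
- have a1 : 0 <= u / 2 by lra.
  have a2 : u / 2 <= 1 by lra.
  have [S1 [S' [P1 P' le1]]] := partI_split P a1 a2.
  have b1 : u / 2 <= 1 - u / 2 by lra.
  have b2 : 1 - u / 2 <= 1 by lra.
  have [S2 [S3 [P2 P3 le2]]] := partI_split P' b1 b2.
  have Q1 : partI (H 0 \o (fun t => 4 * t)) 0 (u / 2) S1.
    apply: (partI_ext _ P1) => x /andP[x0 x1] /=.
    rewrite GE; first (congr (H 0 _); rewrite /mE; dmin; lra).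
    + apply/andP; split; lra.
    + apply/andP; split; lra.
    + apply/orP; right; apply/orP; left; lra.
  have Q1' : partI (H 0) (4 * 0) (4 * (u / 2)) S1.
    by apply: (partI_mono _ Q1) => x y _ xy _; lra.
  rewrite mulr0 (_ : 4 * (u / 2) = 2 * u) in Q1'; last lra.
  have Q2 : partI (H^~ (2 * u) \o (fun t => mX t u)) (u / 2) (1 - u / 2) S2.
    apply: (partI_ext _ P2) => x /andP[x0 x1] /=.
    rewrite G_mid //; apply/and3P; split; lra.
  have d : 0 < 2 - 2 * u by lra.
  have Q2' : partI (H^~ (2 * u)) (mX (u / 2) u) (mX (1 - u / 2) u) S2.
    apply: (partI_mono _ Q2) => x y _ xy _.
    by rewrite /mX ler_pM2r ?invr_gt0 //; lra.
  rewrite /mX (_ : 2 * (u / 2) - u = 0) ?mul0r in Q2'; last lra.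
  rewrite (_ : 2 * (1 - u / 2) - u = 2 - 2 * u) ?divff in Q2'; [|lra|lra].
  have Q3 : partI (H 0 \o (fun t => 4 - 4 * t)) (1 - u / 2) 1 S3.
    apply: (partI_ext _ P3) => x /andP[x0 x1] /=.
    rewrite GE; first (congr (H 0 _); rewrite /mE; dmin; lra).
    + apply/andP; split; lra.
    + apply/andP; split; lra.
    + apply/orP; right; apply/orP; right; lra.
  have Q3' : partI (H 0) (4 - 4 * 1) (4 - 4 * (1 - u / 2)) S3.
    by apply: (partI_anti _ Q3) => x y _ xy _; lra.
  rewrite (_ : 4 - 4 * 1 = 0) in Q3'; last lra.
  rewrite (_ : 4 - 4 * (1 - u / 2) = 2 * u) in Q3'; last lra.
  have bu : 0 <= 2 * u <= 1 by apply/andP; split; lra.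
  have w1 := hW _ _ bu Q1'.
  have w3 := hW _ _ bu Q3'.
  have w2 := hL _ _ bu Q2'.
  lra.
- have a1 : 0 <= 1 / 2 :> R by lra.
  have a2 : 1 / 2 <= 1 :> R by lra.
  have [S1 [S2 [P1 P2 le1]]] := partI_split P a1 a2.
  have Q1 : partI (H 0 \o (fun t => Num.min (4 * t) (Num.min (2 * u) (2 - 2 * u)))) 0 (1 / 2) S1.
    apply: (partI_ext _ P1) => x /andP[x0 x1] /=.
    rewrite GE; first (congr (H 0 _); rewrite /mE; dmin; lra).
    + apply/andP; split; lra.
    + apply/andP; split; lra.
    + apply/orP; left; lra.
  have Q1' : partI (H 0) (Num.min (4 * 0) (Num.min (2 * u) (2 - 2 * u))) (Num.min (4 * (1 / 2)) (Num.min (2 * u) (2 - 2 * u))) S1.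
    by apply: (partI_mono _ Q1) => x y _ xy _;  dmin; lra.
  rewrite (_ : Num.min (4 * 0) (Num.min (2 * u) (2 - 2 * u)) = 0) in Q1'; last by  dmin; lra.
  have Q2 : partI (H 0 \o (fun t => Num.min (4 - 4 * t) (Num.min (2 * u) (2 - 2 * u)))) (1 / 2) 1 S2.
    apply: (partI_ext _ P2) => x /andP[x0 x1] /=.
    rewrite GE; first (congr (H 0 _); rewrite /mE; dmin; lra).
    + apply/andP; split; lra.
    + apply/andP; split; lra.
    + apply/orP; left; lra.
  have Q2' : partI (H 0) (Num.min (4 - 4 * 1) (Num.min (2 * u) (2 - 2 * u))) (Num.min (4 - 4 * (1 / 2)) (Num.min (2 * u) (2 - 2 * u))) S2.
    by apply: (partI_anti _ Q2) => x y _ xy _;  dmin; lra.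
  rewrite (_ : Num.min (4 - 4 * 1) (Num.min (2 * u) (2 - 2 * u)) = 0) in Q2'; last by  dmin; lra.
  have b1 : 0 <= Num.min (4 * (1 / 2)) (Num.min (2 * u) (2 - 2 * u)) <= 1 by apply/andP; split;  dmin; lra.
  have b2 : 0 <= Num.min (4 - 4 * (1 / 2)) (Num.min (2 * u) (2 - 2 * u)) <= 1 by apply/andP; split;  dmin; lra.
  have w1 := hW _ _ b1 Q1'.
  have w2 := hW _ _ b2 Q2'.
  lra.
Qed.

Definition hp (a b c : R) := [set p : R * R | a * p.1 + b * p.2 <= c].

Lemma closed_hp a b c : closed (hp a b c).
Proof.
have cf : continuous (fun p : R * R => c - (a * p.1 + b * p.2)).
  move=> x; apply: cvgB; first exact: cvg_cst.
  apply: cvgD; apply: cvgM; (try exact: cvg_cst); [exact: fst_cont | exact: snd_cont].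
have := (continuous_closedP _).1 cf _ (@closed_ge R 0).
congr closed; apply/seteqP; split => p /=; rewrite subr_ge0 //.
Qed.

Lemma sq_eq : @unit_square R = hp (-1) 0 0 `&` hp 1 0 1 `&` hp 0 (-1) 0 `&` hp 0 1 1.
Proof.
apply/seteqP; split => p /=.
  by case=> /andP[? ?] /andP[? ?]; rewrite /hp /=; split; [split; [split|]|]; lra.
rewrite /hp /= => -[[[? ?] ?] ?]; split; apply/andP; split; lra.
Qed.

Lemma G_cont :
  {within @unit_square R, continuous (fun p : R * R => H p.1 p.2)} ->
  {within @unit_square R, continuous (fun p : R * R => Gf p.1 p.2)}.
Proof.
move=> Hc.
have csq : closed (@unit_square R).
  by rewrite sq_eq; repeat apply: closedI; exact: closed_hp.
pose A := @unit_square R `&` hp 0 2 1 `&` hp (-2) 1 0 `&` hp 2 1 2.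
pose B := @unit_square R `&` (hp 0 (-2) (-1) `|` hp 2 (-1) 0 `|` hp (-2) (-1) (-2)).
have cA : closed A by repeat apply: closedI => //; exact: closed_hp.
have cB : closed B.
  by apply: closedI => //; repeat apply: closedU; exact: closed_hp.
have -> : @unit_square R = A `|` B.
  apply/seteqP; split => p.
    move=> hp0; rewrite /A /B /hp /=.
    case: (leP 1 (2 * p.2)) => c1; first by right; split => //; left; left; lra.
    case: (leP (2 * p.1) p.2) => c2; first by right; split => //; left; right; lra.
    case: (leP (2 - p.2) (2 * p.1)) => c3; first by right; split => //; right; lra.
    by left; split; [split; [split => //|]|]; lra.
  by case=> [[[[]]]|[]].
apply: withinU_continuous => //.
- apply: (@subspace_eq_continuous _ _ _ ((fun p : R * R => H p.1 p.2) \o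
           (fun p : R * R => (mX p.1 p.2, 2 * p.2)))).
    move=> p /set_mem [[[hp0 h1] h2] h3] /=.
    rewrite /from_subspace /Gf ifT //; apply/and3P; rewrite /hp /= in h1 h2 h3; split; lra.
  have hM : {within A, continuous ((fun p : R * R => H p.1 p.2) \o
           (fun p : R * R => (mX p.1 p.2, 2 * p.2)))}.
    apply: (within_comp _ _ Hc).
  + move=> p [[[hp0 h1] h2] h3]; rewrite /hp /= in h1 h2 h3.
    have hA : inA p.1 p.2.
      by apply/and3P; split; lra.
    have := mX_01 hA; case: hp0 => _ /andP[? ?].
    by split => //=; apply/andP; split; lra.
  + move=> p [[[hp0 h1] h2] h3]; rewrite /hp /= in h1.
    by apply: phiM_cont; lra.
  exact: hM.
- apply: (@subspace_eq_continuous _ _ _ ((fun p : R * R => H p.1 p.2) \o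
           (fun p : R * R => (0, mE p.1 p.2)))).
    move=> p /set_mem [hp0 hb] /=.
    case: hp0 => h1 h2.
    rewrite /from_subspace GE //; rewrite /hp /= in hb.
    case: hb => [[hb|hb]|hb]; apply/or3P; [constructor 1|constructor 2|constructor 3]; lra.
  have hE : {within B, continuous ((fun p : R * R => H p.1 p.2) \o
           (fun p : R * R => (0, mE p.1 p.2)))}.
    apply: (within_comp _ _ Hc).
  + move=> p [[h1 h2] _]; split => /=; first by rewrite lexx ler01.
    exact: mE_01.
  + move=> p _; exact: phiE_cont.
  exact: hE.
Qed.

End Main.

Unset Implicit Arguments. Set Strict Implicit.

Theorem mainTheorem6 (R : realType) (N c : nat) (M : set 'rV[R]_N)
  (gamma : R -> 'rV[R]_N) (L W : R) (H : R -> R -> 'rV[R]_N) :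
  closed_submanifold c M ->
  (* gamma: closed piecewise differentiable curve on M of length L *)
  (forall t, 0 <= t <= 1 -> M (gamma t)) ->
  gamma 0 = gamma 1 ->
  piecewise_C1 gamma ->
  curve_length gamma 0 1 = L%:E ->
  (* H: homotopy of closed curves of length <= L, from gamma to a point *)
  {within @unit_square R, continuous (fun p : R * R => H p.1 p.2)} ->
  (forall t tau, 0 <= t <= 1 -> 0 <= tau <= 1 -> M (H t tau)) ->
  (forall t, 0 <= t <= 1 -> H t 0 = gamma t) ->
  (forall tau, 0 <= tau <= 1 -> H 0 tau = H 1 tau) ->
  (forall tau, 0 <= tau <= 1 -> (curve_length (H ^~ tau) 0 1 <= L%:E)%E) ->
  (exists q, forall t, 0 <= t <= 1 -> H t 1 = q) ->
  (* H has width W *)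
  ereal_sup [set curve_length (H t) 0 1 | t in [set t : R | 0 <= t <= 1]]
    = W%:E ->
  exists G : R -> R -> 'rV[R]_N,
    [/\ {within @unit_square R, continuous (fun p : R * R => G p.1 p.2)},
        (forall t tau, 0 <= t <= 1 -> 0 <= tau <= 1 -> M (G t tau)),
        (forall t, 0 <= t <= 1 -> G t 0 = gamma t /\ G t 1 = gamma 0),
        (forall tau, 0 <= tau <= 1 -> G 0 tau = gamma 0 /\ G 1 tau = gamma 0) &
        (forall tau, 0 <= tau <= 1 ->
           (curve_length (G ^~ tau) 0 1 <= (L + 2 * W)%:E)%E)].
Proof.
move=> _ _ _ _ hlen Hc HM H0 H01 HL [q Hq] hW.
have i01 : (0 : R) <= (0 : R) <= (1 : R) by apply/andP; split; lra.
have i11 : (0 : R) <= (1 : R) <= (1 : R) by apply/andP; split; lra.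
have g0 : H 0 0 = gamma 0 by exact: H0.
exists (Gf H); split.
- exact: (G_cont H01 Hq Hc).
- move=> t u ht hu; rewrite /Gf; case: ifP => hA.
    apply: HM; first exact: mX_01.
    by move: hA hu => /and3P[h1 _ _] /andP[? ?]; apply/andP; split; lra.
  by apply: HM => //; exact: mE_01.
- move=> t ht; split.
    have hA : inA t 0 by move: ht => /andP[? ?]; apply/and3P; split; lra.
    rewrite /Gf hA mulr0 -H0 //; congr (H _ 0).
    by rewrite /mX; field.
  rewrite (GE H01 Hq) //; last by apply/orP; left; lra.
  rewrite -g0; congr (H 0 _); rewrite /mE; move: ht => /andP[? ?]; dmin; lra.
- move=> u hu; split.
    rewrite (GE H01 Hq) //; last by move: hu => /andP[? ?]; apply/orP; right; apply/orP; left; lra.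
    rewrite -g0; congr (H 0 _); rewrite /mE; move: hu => /andP[? ?]; dmin; lra.
  rewrite (GE H01 Hq) //; last by move: hu => /andP[? ?]; apply/orP; right; apply/orP; right; lra.
  rewrite -g0; congr (H 0 _); rewrite /mE; move: hu => /andP[? ?]; dmin; lra.
- move=> u hu.
  have HW : (curve_length (H 0%R) 0%R 1%R <= W%:E)%E.
    by rewrite -hW; apply: ereal_sup_ubound; exists (0 : R).
  have L0 : 0 <= L.
    have := len_ge (partI_one gamma (@ler01 R)); rewrite hlen lee_fin.
    by apply: le_trans; exact: eucl_ge0.
  have W0 : 0 <= W.
    have := len_bound HW (partI_one (H 0) (@ler01 R)).
    by apply: le_trans; exact: eucl_ge0.
  apply: len_le => S P.
  apply: (G_len H01 Hq hu L0 W0 _ _ P).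
    move=> y S' /andP[y0 y1] P'.
    have := len_bound HW (partI_cat P' (partI_one (H 0) y1)).
    by apply: le_trans; rewrite lerDl eucl_ge0.
  move=> v S' hv P'; exact: len_bound (HL v hv) P'.
Qed.
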